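(* Let $n\ge2$ be an integer. (1) For $2\le k\le n$, let $x_1^{(n-1,k-1)}$ denote the smallest real root of $x\mapsto K_{k-1}^{(n-1)}(x)$. Then $K_k^{(n)}(x)\ge K_k^{(n)}(x+1)$ for all real $x$ with $0\le x\le x_1^{(n-1,k-1)}$. (2) For all $k\in[0:n]$ and all integers $x\in[0:n]$, \[ \left|K_k^{(n)}(x)\right|<2^{\frac n2\left(1+H\left(\frac kn\right)-H\left(\frac xn\right)+\frac1n\log_2(n+1)\right)}, \] where $H(p)=-p\log_2p-(1-p)\log_2(1-p)$ is the binary entropy function (with $H(0)=H(1)=0$).
   Context: For integers $n\ge1$, $k\in[0:n]$ and real $x$, the Krawtchouk polynomial is $K_k^{(n)}(x):=\sum_{j=0}^{k}(-1)^{j}\binom{x}{j}\binom{n-x}{k-j}$, with generalized binomial coefficients $\binom{x}{j}=\frac{x(x-1)\cdots(x-j+1)}{j!}$. For $k\ge1$, $x\mapsto K_k^{(n)}(x)$ has $k$ distinct real roots. *)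

(* Defs.v *)
From Stdlib Require Import Reals Lra Lia Arith Factorial.
Open Scope R_scope.

Fixpoint fallfact (x : R) (j : nat) : R :=
  match j with
  | O => 1
  | S j' => fallfact x j' * (x - INR j')
  end.

Definition gbinom (x : R) (j : nat) : R := fallfact x j / INR (fact j).

Definition kraw (n k : nat) (x : R) : R :=
  sum_f_R0 (fun j => (-1) ^ j * gbinom x j * gbinom (INR n - x) (k - j)) k.

Definition log2 (x : R) : R := ln x / ln 2.

Definition plog2p (p : R) : R := if Req_EM_T p 0 then 0 else p * log2 p.

Definition Hbin (p : R) : R := - plog2p p - plog2p (1 - p).

(* Main.v *)
Require Import Defs.
From Stdlib Require Import Reals Lra Lia Factorial.
From HB Require Import structures.
From mathcomp.algebra_tactics Require ring.
From mathcomp Require zify.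
From mathcomp Require all_boot all_order all_algebra Rstruct.
Open Scope R_scope.
Module Core.
Import ring zify.
Import all_boot all_order all_algebra Rstruct.
Import GRing.Theory Num.Theory.
Local Open Scope nat_scope.
Lemma L1 (N a b : nat) : (a <= b -> b <= N -> 'C(N,b) * 'C(b,a) = 'C(N,a) * 'C(N-a, b-a))%N.
Proof.
move=> hab hbN.
have hpos : 0 < a`! * (b-a)`! * (N-b)`! by rewrite !muln_gt0 !fact_gt0.
apply/eqP; rewrite -(eqn_pmul2r hpos); apply/eqP.
have e1 : 'C(N,b) * 'C(b,a) * (a`! * (b-a)`! * (N-b)`!) = 'C(N,b) * ('C(b,a) * (a`! * (b-a)`!)) * (N-b)`!.
  by rewrite !mulnA.
rewrite e1 bin_fact // -mulnA bin_fact //.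
have e2 : 'C(N,a) * 'C(N-a, b-a) * (a`! * (b-a)`! * (N-b)`!) = 'C(N,a) * a`! * ('C(N-a, b-a) * ((b-a)`! * ((N-a)-(b-a))`!)).
  have -> : (N-a)-(b-a) = N-b by lia.
  rewrite !mulnA; congr (_ * _); rewrite -!mulnA; congr (_ * _); rewrite mulnC -mulnA; congr (_ * _); by rewrite mulnC.
rewrite e2 bin_fact; last by lia.
by rewrite -mulnA bin_fact // ?leq_subr; lia.
Qed.

Lemma L2 (M u v : nat) : ('C(M,u) * 'C(M-u,v) = 'C(M,v) * 'C(M-v,u))%N.
Proof.
case: (leqP (u+v) M) => h.
  have A := L1 M u (u+v) (leq_addr v u) h.
  have B := L1 M v (u+v) (leq_addl u v) h.
  rewrite addKn in A; rewrite addnK in B.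
  rewrite -A -B; congr (_ * _).
  by have := bin_sub (leq_addl u v); rewrite addnK.
case: (leqP u M) => hu.
  case: (leqP v M) => hv.
    by rewrite !(@bin_small (M-_)) ?muln0 //; lia.
  by rewrite (@bin_small M v) // (@bin_small (M-u) v) ?muln0 ?mul0n //; lia.
by rewrite (@bin_small M u) // mul0n (@bin_small (M-v) u) ?muln0 //; lia.
Qed.

Lemma tri (n x k j : nat) : (j <= x -> x <= n -> j <= k -> k <= n ->
  'C(n,x) * 'C(x,j) * 'C(n-x,k-j) = 'C(n,k) * 'C(k,j) * 'C(n-k,x-j))%N.
Proof.
move=> h1 h2 h3 h4.
rewrite L1 // L1 // -!mulnA; congr (_ * _).
have := L2 (n-j) (x-j) (k-j).
have -> : n - j - (x - j) = n - x by lia.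
by have -> : n - j - (k - j) = n - k by lia.
Qed.


Local Open Scope ring_scope.
Definition Kn (n k x : nat) : R := \sum_(j < k.+1) (-1)^+j * ('C(x,j))%:R * ('C(n-x,k-j))%:R.

Lemma coef_1mX (x j : nat) : ((1 - 'X)^+x : {poly R})`_j = (-1)^+j * ('C(x,j))%:R.
Proof.
elim: x j => [|x IH] j.
  by rewrite expr0 coef1 bin0n; case: j => [|j] /=; rewrite ?mulr1 ?mulr0.
rewrite exprSr mulrBr mulr1 coefB coefMX IH.
case: j => [|j] /=; first by rewrite subr0 !bin0.
rewrite IH binS natrD exprS; ring.
Qed.

Lemma coef_1pX (x j : nat) : ((1 + 'X)^+x : {poly R})`_j = ('C(x,j))%:R.
Proof.
elim: x j => [|x IH] j.
  by rewrite expr0 coef1 bin0n; case: j.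
rewrite exprSr mulrDr mulr1 coefD coefMX IH.
case: j => [|j] /=; first by rewrite addr0 !bin0.
by rewrite IH binS natrD.
Qed.

Lemma reidx (V : nmodType) (f : nat -> V) j n : (j <= n)%N ->
  \sum_(x < n.+1 | (j <= x)%N) f x = \sum_(m < (n-j).+1) f (j+m)%N.
Proof.
move=> hj.
rewrite (_ : \sum_(x < n.+1 | (j <= x)%N) f x = \sum_(j <= x < n.+1) f x); last by rewrite big_geq_mkord.
rewrite -{1}(add0n j) big_addn -subSn // big_mkord.
by apply: eq_bigr => i _; rewrite addnC.
Qed.

Lemma ident (V : comNzRingType) (a b : V) n k : (k <= n)%N ->
 \sum_(x < n.+1) \sum_(j < x.+1) ((-1)^+j * a^+x * b^+(n-x)) *+ ('C(k,j) * 'C(n-k,x-j))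
 = (b - a)^+k * (b + a)^+(n-k).
Proof.
move=> hk.
pose F j m := ((-1)^+j * a^+(j+m) * b^+(n-(j+m))) *+ ('C(k,j) * 'C(n-k,m)).
have -> : \sum_(x < n.+1) \sum_(j < x.+1) ((-1)^+j * a^+x * b^+(n-x)) *+ ('C(k,j) * 'C(n-k,x-j))
   = \sum_(j < n.+1) \sum_(m < (n-j).+1) F j m.
  transitivity (\sum_(x < n.+1) \sum_(j < n.+1 | (j <= x)%N) ((-1)^+j * a^+x * b^+(n-x)) *+ ('C(k,j) * 'C(n-k,x-j))).
    apply: eq_bigr => x _.
    rewrite (big_ord_widen (n.+1) (fun j => ((-1)^+j * a^+x * b^+(n-x)) *+ ('C(k,j) * 'C(n-k,x-j)))); last exact: ltn_ord.
    by apply: eq_bigl => j; rewrite ltnS.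
  rewrite (exchange_big_dep xpredT) //=.
  apply: eq_bigr => j _.
  rewrite (reidx _ (fun x => ((-1)^+j * a^+x * b^+(n-x)) *+ ('C(k,j) * 'C(n-k,x-j)))); last by rewrite -ltnS ltn_ord.
  by apply: eq_bigr => m _; rewrite /F addKn.
rewrite exprBn exprDn big_distrlr /=.
rewrite (big_ord_widen (n.+1) (fun j => \sum_(j0 < (n - k).+1)
  ((-1) ^+ j * b ^+ (k - j) * a ^+ j *+ 'C(k, j) * (b ^+ (n - k - j0) * a ^+ j0 *+ 'C(n - k, j0))))); last by [].
rewrite [RHS]big_mkcond /=.
apply: eq_bigr => [[j hj]] _ /=.
case: ifP => hjk; last first.
  apply: big1 => m _; rewrite /F bin_small ?mul0n ?mulr0n //.
  by rewrite ltnNge -ltnS hjk.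
have hjk' : (j <= k)%N by rewrite -ltnS.
rewrite (big_ord_widen ((n-j).+1) (fun j0 => ((-1) ^+ j * b ^+ (k - j) * a ^+ j *+ 'C(k, j) * (b ^+ (n - k - j0) * a ^+ j0 *+ 'C(n - k, j0))))); last by rewrite ltnS leq_sub2l.
rewrite [RHS]big_mkcond /=.
apply: eq_bigr => [[m hm]] _ /=.
case: ifP => hmk; last first.
  by rewrite /F (@bin_small (n-k) m) ?muln0 ?mulr0n //; move/negbT: hmk; rewrite -leqNgt.
rewrite /F mulrnAl mulrnAr -mulrnA.
have -> : (n - (j + m) = (k - j) + (n - k - m))%N.
  rewrite ltnS in hmk; lia.
rewrite exprD exprD; congr (_ *+ _); last by rewrite mulnC.
ring.
Qed.

Lemma coefP n k x : ((1-'X)^+x * (1+'X)^+(n-x) : {poly R})`_k = Kn n k x.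
Proof.
rewrite coefM /Kn; apply: eq_bigr => j _.
by rewrite coef_1mX coef_1pX.
Qed.

Lemma coefsign (j k : nat) (p : {poly R}) : ((-1)^+j * p)`_k = (-1)^+j * p`_k.
Proof.
rewrite (_ : (-1)^+j = ((-1)^+j)%:P); last by rewrite rmorphXn rmorphN rmorph1.
by rewrite coefCM.
Qed.

Lemma termeq (p q : {poly R}) (j c k : nat) :
  ((-1)^+j * p * q *+ c)`_k = (-1)^+j * (p * q)`_k * c%:R.
Proof. by rewrite coefMn -mulrA coefsign mulr_natr. Qed.

Lemma sum_KK n k : (k <= n)%N -> \sum_(x < n.+1) Kn n x k * Kn n k x = 2^+n.
Proof.
move=> hk.
have := congr1 (fun p : {poly R} => p`_k) (@ident {poly R} (1 - 'X) (1 + 'X) n k hk).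
rewrite coef_sum => H.
rewrite (_ : (1 + 'X) - (1 - 'X) = 2%:R%:P * 'X) in H; last first.
  by rewrite polyC_natr; ring.
rewrite (_ : (1 + 'X) + (1 - 'X) = 2%:R%:P) in H; last first.
  by rewrite polyC_natr; ring.
rewrite exprMn -!(rmorphXn polyC) mulrAC -(rmorphM polyC) -exprD subnKC // coefCM coefXn eqxx mulr1 in H.
rewrite -H; apply: eq_bigr => x _.
rewrite coef_sum -(coefP n k x) {1}/Kn mulr_suml; apply: eq_bigr => j _.
symmetry; etransitivity; first exact: termeq.
rewrite natrM; ring.
Qed.

Lemma recip n k x : (k <= n)%N -> (x <= n)%N ->
  'C(n,x)%:R * Kn n k x = 'C(n,k)%:R * Kn n x k.
Proof.
move=> hk hx; rewrite /Kn !mulr_sumr.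
rewrite (big_ord_widen n.+1 (fun j => 'C(n,x)%:R * ((-1)^+j * 'C(x,j)%:R * 'C(n-x,k-j)%:R))) // big_mkcond /=.
rewrite (big_ord_widen n.+1 (fun j => 'C(n,k)%:R * ((-1)^+j * 'C(k,j)%:R * 'C(n-k,x-j)%:R))) // [RHS]big_mkcond /=.
apply: eq_bigr => [[j hj]] _ /=.
case: ifP => h1; case: ifP => h2.
- move: h1 h2; rewrite !ltnS => h1 h2.
  have := tri n x k j h2 hx h1 hk => /(congr1 (fun m => m%:R : R)).
  rewrite !natrM => E.
  transitivity (((-1)^+j * ('C(n, x)%:R * 'C(x, j)%:R * 'C(n - x, k - j)%:R))%R : R); first ring.
  rewrite E; ring.
- rewrite (@bin_small x j); first ring.
  by move/negbT: h2; rewrite -leqNgt.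
- rewrite (@bin_small k j); first ring.
  by move/negbT: h1; rewrite -leqNgt.
- by [].
Qed.

Lemma sumsq n k : (k <= n)%N ->
  \sum_(x < n.+1) 'C(n,x)%:R * (Kn n k x)^+2 = 'C(n,k)%:R * 2^+n.
Proof.
move=> hk; rewrite -(sum_KK n k hk) mulr_sumr; apply: eq_bigr => x _.
have hx : (x <= n)%N by rewrite -ltnS ltn_ord.
rewrite expr2 mulrA (recip n k x hk hx); ring.
Qed.
Lemma fallfact_nat m j : fallfact (INR m) j = INR (m ^_ j).
Proof.
elim: j => [|j IH] //=.
rewrite IH ffactnSr.
case: (leqP j m) => h.
  have e : INR (m - j)%N = Rminus (INR m) (INR j) := minus_INR _ _ (elimT leP h).
  by rewrite mult_INR e.
by rewrite ffact_small // mul0n /= Rmult_0_l.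
Qed.

Lemma gbinom_nat m j : gbinom (INR m) j = INR ('C(m,j)).
Proof.
rewrite /gbinom fallfact_nat -bin_ffact mult_INR factE.
have h := INR_fact_neq_0 j; rewrite factE in h.
by rewrite /Rdiv Rmult_assoc Rinv_r // Rmult_1_r.
Qed.

Lemma kraw_Kn n k x : (x <= n)%N -> kraw n k (INR x) = Kn n k x.
Proof.
move=> hx.
rewrite /kraw sum_f_R0E big_mkord /Kn; apply: eq_bigr => j _.
have e : Rminus (INR n) (INR x) = INR (n - x)%N := esym (minus_INR _ _ (elimT leP hx)).
rewrite e !gbinom_nat !INRE RpowE.
reflexivity.
Qed.
Lemma C_bin n k : (k <= n)%N -> Binomial.C n k = INR ('C(n,k)).
Proof.
move=> hk.
have h1 := INR_fact_neq_0 k; have h2 := INR_fact_neq_0 (n-k).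
have E : INR (Factorial.fact n) = Rmult (INR ('C(n,k))) (Rmult (INR (Factorial.fact k)) (INR (Factorial.fact (n - k)))).
  by rewrite !factE -!mult_INR !multE bin_fact.
rewrite /Binomial.C E /Rdiv Rmult_assoc Rinv_r ?Rmult_1_r //.
exact: Rmult_integral_contrapositive_currified.
Qed.

Lemma Kn0 n k : Kn n k 0 = 'C(n,k)%:R.
Proof.
rewrite /Kn big_ord_recl /= bin0 expr0 !mul1r big1 ?addr0; first by rewrite !subn0.
move=> i _; rewrite bin0n /=; ring.
Qed.

Lemma X1 n k x : (k <= n)%coq_nat -> (x <= n)%coq_nat ->
  Rle (Rmult (Binomial.C n x) (Rmult (kraw n k (INR x)) (kraw n k (INR x))))
      (Rmult (pow (INR 2) n) (Binomial.C n k)).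
Proof.
move=> /leP hk /leP hx.
have e2 : INR 2 = 2%:R by rewrite INRE.
rewrite !C_bin // kraw_Kn // e2.
have hx' : (x < n.+1)%N by rewrite ltnS.
have := sumsq n k hk.
rewrite (bigD1 (Ordinal hx')) //= => S.
apply/RleP; rewrite RpowE !INRE !RmultE -expr2 (mulrC (2%:R ^+ n)) -S lerDl.
apply: sumr_ge0 => i _; apply: mulr_ge0; [exact: ler0n | exact: sqr_ge0].
Qed.

Lemma X2 n k x : (k <= n)%coq_nat -> (x <= n)%coq_nat -> (0 < x)%coq_nat ->
  Rle (Rplus (Rmult (Binomial.C n x) (Rmult (kraw n k (INR x)) (kraw n k (INR x))))
             (Rmult (Binomial.C n k) (Binomial.C n k)))
      (Rmult (pow (INR 2) n) (Binomial.C n k)).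
Proof.
move=> /leP hk /leP hx /ltP x0.
have e2 : INR 2 = 2%:R by rewrite INRE.
rewrite !C_bin // kraw_Kn // e2.
have hx' : (x < n.+1)%N by rewrite ltnS.
have := sumsq n k hk.
rewrite (bigD1 (Ordinal hx')) //= (bigD1 ord0) /=; last first.
  by rewrite -val_eqE /= eq_sym -lt0n.
rewrite bin0 Kn0 mul1r => S.
apply/RleP; rewrite RpowE !INRE !RmultE RplusE -!expr2 (mulrC (2%:R ^+ n)) -S addrA.
rewrite lerDl.
apply: sumr_ge0 => i _; apply: mulr_ge0; [exact: ler0n | exact: sqr_ge0].
Qed.

Lemma X3 n k : (k <= n)%coq_nat -> kraw n k (INR 0) = Binomial.C n k.
Proof. move=> /leP hk. rewrite kraw_Kn // Kn0 C_bin //; exact: (esym (INRE _)). Qed.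
Lemma X4 n j : (j < n)%coq_nat ->
  Rmult (Binomial.C n (S j)) (INR (S j)) = Rmult (Binomial.C n j) (INR (n - j)).
Proof.
move=> /ltP hj.
rewrite C_bin // C_bin; last exact: ltnW.
rewrite -!mult_INR !multE; congr INR.
by rewrite mulnC mul_bin_left mulnC.
Qed.
End Core.

Set Bullet Behavior "Strict Subproofs".


Lemma cont_fallfact g j : continuity g -> continuity (fun x => fallfact (g x) j).
Proof.
  intro Hg; induction j; simpl.
  - apply continuity_const; intros a b; reflexivity.
  - apply (continuity_mult (fun x => fallfact (g x) j) (fun x => g x - INR j)); [exact IHj|].
    apply (continuity_minus g (fun _ => INR j)); [exact Hg|].
    apply continuity_const; intros a b; reflexivity.
Qed.

Lemma cont_gbinom g j : continuity g -> continuity (fun x => gbinom (g x) j).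
Proof.
  intro Hg; unfold gbinom, Rdiv.
  apply (continuity_mult (fun x => fallfact (g x) j) (fun _ => / INR (fact j))).
  - apply cont_fallfact; exact Hg.
  - apply continuity_const; intros a b; reflexivity.
Qed.

Lemma cont_sum (F : nat -> R -> R) N :
  (forall j, continuity (F j)) -> continuity (fun x => sum_f_R0 (fun j => F j x) N).
Proof.
  intro H; induction N; simpl.
  - exact (H 0%nat).
  - apply (continuity_plus (fun x => sum_f_R0 (fun j => F j x) N) (F (S N))); auto.
Qed.

Lemma cont_kraw n k : continuity (kraw n k).
Proof.
  unfold kraw.
  apply (cont_sum (fun j x => (-1)^j * gbinom x j * gbinom (INR n - x) (k - j))).
  intro j.
  apply (continuity_mult (fun x => (-1)^j * gbinom x j) (fun x => gbinom (INR n - x) (k - j))).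
  - apply (continuity_mult (fun _ => (-1)^j) (fun x => gbinom x j)).
    + apply continuity_const; intros a b; reflexivity.
    + apply (cont_gbinom (fun x => x)); exact (derivable_continuous _ derivable_id).
  - apply (cont_gbinom (fun x => INR n - x)).
    apply (continuity_minus (fun _ => INR n) (fun x => x)).
    + apply continuity_const; intros a b; reflexivity.
    + exact (derivable_continuous _ derivable_id).
Qed.

Lemma fallfact_succ x j : fallfact (x + 1) (S j) = (x + 1) * fallfact x j.
Proof.
  induction j.
  - simpl; ring.
  - change (fallfact (x + 1) (S (S j))) with (fallfact (x+1) (S j) * (x + 1 - INR (S j))).
    rewrite IHj, S_INR; simpl; ring.
Qed.

Lemma gbinom_pascal x j : gbinom (x + 1) (S j) = gbinom x (S j) + gbinom x j.
Proof.
  unfold gbinom. rewrite fallfact_succ.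
  change (fallfact x (S j)) with (fallfact x j * (x - INR j)).
  change (fact (S j)) with (S j * fact j)%nat.
  rewrite mult_INR, S_INR.
  pose proof (INR_fact_lt_0 j). pose proof (pos_INR j).
  field; lra.
Qed.

Lemma gbinom0 y : gbinom y 0 = 1.
Proof. unfold gbinom; simpl; field. Qed.

Lemma kraw_diff n m x : (1 <= n)%nat ->
  kraw n (S m) x - kraw n (S m) (x + 1) = 2 * kraw (n - 1) m x.
Proof.
  intro Hn.
  set (b := INR (n - 1) - x).
  assert (Eb1 : INR n - x = b + 1).
  { unfold b. rewrite minus_INR by lia. simpl. lra. }
  assert (Eb : INR n - (x + 1) = b).
  { unfold b. rewrite minus_INR by lia. simpl. lra. }
  unfold kraw. rewrite Eb1, Eb. fold b.
  set (A := sum_f_R0 (fun j => (-1) ^ j * gbinom x j * gbinom b (m - j)) m).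
  set (T := sum_f_R0 (fun j => (-1) ^ j * gbinom x j * gbinom b (S m - j)) (S m)).
  assert (C1 : sum_f_R0 (fun j => (-1) ^ j * gbinom x j * gbinom (b + 1) (S m - j)) (S m) = T + A).
  { unfold T, A. rewrite !tech5.
    replace (S m - S m)%nat with 0%nat by lia.
    rewrite (sum_eq (fun j => (-1) ^ j * gbinom x j * gbinom (b + 1) (S m - j))
       (fun j => (-1) ^ j * gbinom x j * gbinom b (S m - j) + (-1) ^ j * gbinom x j * gbinom b (m - j))).
    - rewrite plus_sum, !gbinom0. ring.
    - intros i Hi. replace (S m - i)%nat with (S (m - i)) by lia.
      rewrite gbinom_pascal. ring. }
  assert (C2 : sum_f_R0 (fun j => (-1) ^ j * gbinom (x + 1) j * gbinom b (S m - j)) (S m) = T - A).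
  { unfold T, A. rewrite (decomp_sum _ (S m)) by lia. rewrite (decomp_sum (fun j => (-1) ^ j * gbinom x j * gbinom b (S m - j)) (S m)) by lia.
    simpl pred.
    rewrite (sum_eq (fun i => (-1) ^ S i * gbinom (x + 1) (S i) * gbinom b (S m - S i))
       (fun i => (-1) ^ S i * gbinom x (S i) * gbinom b (S m - S i) - (-1) ^ i * gbinom x i * gbinom b (m - i))).
    - rewrite minus_sum, !gbinom0. ring.
    - intros i Hi. rewrite gbinom_pascal. simpl. ring. }
  rewrite C1, C2. unfold A. ring.
Qed.

Lemma C_pos n k : 0 < C n k.
Proof.
  unfold C. apply Rdiv_lt_0_compat; [apply INR_fact_lt_0|].
  apply Rmult_lt_0_compat; apply INR_fact_lt_0.
Qed.

Lemma part1 n (hn : (2 <= n)%nat) :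
  forall (k : nat), (2 <= k <= n)%nat ->
     forall x1 : R,
       kraw (n - 1) (k - 1) x1 = 0 ->
       (forall y : R, kraw (n - 1) (k - 1) y = 0 -> x1 <= y) ->
       forall x : R, 0 <= x <= x1 -> kraw n k x >= kraw n k (x + 1).
Proof.
  intros k Hk x1 Hr Hmin x Hx.
  assert (Hpos : 0 < kraw (n - 1) (k - 1) 0).
  { replace (kraw (n - 1) (k - 1) 0) with (C (n - 1) (k - 1)).
    - apply C_pos.
    - symmetry. apply Core.X3. lia. }
  assert (Hnn : 0 <= kraw (n - 1) (k - 1) x).
  { destruct (Rle_lt_dec 0 (kraw (n - 1) (k - 1) x)) as [h|h]; [exact h|].
    exfalso.
    destruct (Req_dec x 0) as [e|e].
    - subst x. lra.
    - destruct (IVT (fun y => - kraw (n - 1) (k - 1) y) 0 x) as [z [Hz Hz0]].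
      + apply (continuity_opp (kraw (n - 1) (k - 1))). apply cont_kraw.
      + lra.
      + lra.
      + lra.
      + assert (Hz1 : kraw (n - 1) (k - 1) z = 0) by lra.
        pose proof (Hmin z Hz1).
        assert (z = x) by lra. subst z. lra. }
  pose proof (kraw_diff n (k - 1) x ltac:(lia)) as D.
  replace (S (k - 1)) with k in D by lia.
  lra.
Qed.




Lemma Cn0 n : C n 0 = 1.
Proof. unfold C. rewrite Nat.sub_0_r. simpl. field. apply INR_fact_neq_0. Qed.

Lemma Cnn n : C n n = 1.
Proof. unfold C. rewrite Nat.sub_diag. simpl. field. apply INR_fact_neq_0. Qed.

Lemma Rp2_pos y : 0 < Rpower 2 y.
Proof. unfold Rpower. apply exp_pos. Qed.

Lemma ln2_pos : 0 < ln 2.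
Proof. rewrite <- ln_1. apply ln_increasing; lra. Qed.

Lemma Hbin0 : Hbin 0 = 0.
Proof.
  unfold Hbin, plog2p. replace (1 - 0) with 1 by ring.
  destruct (Req_EM_T 0 0); [|congruence].
  destruct (Req_EM_T 1 0); [lra|].
  unfold log2. rewrite ln_1. field. pose proof ln2_pos; lra.
Qed.

Lemma Hbin1 : Hbin 1 = 0.
Proof.
  unfold Hbin, plog2p. replace (1 - 1) with 0 by ring.
  destruct (Req_EM_T 0 0); [|congruence].
  destruct (Req_EM_T 1 0); [lra|].
  unfold log2. rewrite ln_1. field. pose proof ln2_pos; lra.
Qed.

Lemma Hbin_int p : 0 < p < 1 ->
  Hbin p = - (p * (ln p / ln 2)) - ((1 - p) * (ln (1 - p) / ln 2)).
Proof.
  intro H. unfold Hbin, plog2p, log2.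
  destruct (Req_EM_T p 0); [lra|].
  destruct (Req_EM_T (1 - p) 0); [lra|].
  reflexivity.
Qed.

Lemma key n k : (0 < k)%nat -> (k < n)%nat ->
  (INR k / INR n) ^ k * (1 - INR k / INR n) ^ (n - k)
  = Rpower 2 (- (INR n * Hbin (INR k / INR n))).
Proof.
  intros H0 H1.
  assert (Hk : 0 < INR k) by (apply lt_0_INR; lia).
  assert (Hkn : INR k < INR n) by (apply lt_INR; lia).
  set (p := INR k / INR n).
  assert (Hp : 0 < p < 1).
  { unfold p; split.
    - apply Rdiv_lt_0_compat; lra.
    - apply Rmult_lt_reg_r with (INR n); [lra|]. unfold Rdiv. rewrite Rmult_assoc, Rinv_l by lra. lra. }
  rewrite Hbin_int by exact Hp.
  assert (Hpk : 0 < p ^ k) by (apply pow_lt; lra).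
  assert (Hqk : 0 < (1 - p) ^ (n - k)) by (apply pow_lt; lra).
  rewrite <- (exp_ln (p ^ k * (1 - p) ^ (n - k))) by (apply Rmult_lt_0_compat; assumption).
  unfold Rpower. f_equal.
  rewrite ln_mult by assumption.
  rewrite !ln_pow by lra.
  rewrite minus_INR by lia.
  pose proof ln2_pos.
  unfold p. field. split; lra.
Qed.

Lemma sum_nonneg (f : nat -> R) N :
  (forall i, (i <= N)%nat -> 0 <= f i) -> 0 <= sum_f_R0 f N.
Proof.
  intros Hf. induction N.
  - simpl. apply Hf. lia.
  - rewrite tech5. pose proof (IHN (fun i Hi => Hf i ltac:(lia))). pose proof (Hf (S N) ltac:(lia)). lra.
Qed.

Lemma single_le (f : nat -> R) N k :
  (forall i, (i <= N)%nat -> 0 <= f i) -> (k <= N)%nat -> f k <= sum_f_R0 f N.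
Proof.
  intros Hf. induction N; intro Hk.
  - replace k with 0%nat by lia. simpl. lra.
  - rewrite tech5. destruct (Nat.eq_dec k (S N)) as [e|e].
    + subst k. pose proof (sum_nonneg f N (fun i Hi => Hf i ltac:(lia))). lra.
    + pose proof (IHN (fun i Hi => Hf i ltac:(lia)) ltac:(lia)). pose proof (Hf (S N) ltac:(lia)). lra.
Qed.

Lemma sum_le_const (f : nat -> R) N M :
  (forall i, (i <= N)%nat -> f i <= M) -> sum_f_R0 f N <= INR (S N) * M.
Proof.
  intros Hf. induction N.
  - simpl. pose proof (Hf 0%nat ltac:(lia)). lra.
  - rewrite tech5. pose proof (IHN (fun i Hi => Hf i ltac:(lia))). pose proof (Hf (S N) ltac:(lia)).
    rewrite (S_INR (S N)). lra.
Qed.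

Lemma ent_up n k : (1 <= n)%nat -> (k <= n)%nat ->
  C n k <= Rpower 2 (INR n * Hbin (INR k / INR n)).
Proof.
  intros Hn Hk.
  assert (HN : 0 < INR n) by (apply lt_0_INR; lia).
  destruct (Nat.eq_dec k 0) as [e|e].
  { subst k. rewrite Cn0. replace (INR 0 / INR n) with 0 by (simpl; field; lra).
    rewrite Hbin0, Rmult_0_r, Rpower_O by lra. lra. }
  destruct (Nat.eq_dec k n) as [e'|e'].
  { subst k. rewrite Cnn. replace (INR n / INR n) with 1 by (field; lra).
    rewrite Hbin1, Rmult_0_r, Rpower_O by lra. lra. }
  set (p := INR k / INR n).
  assert (Hkp : 0 < INR k) by (apply lt_0_INR; lia).
  assert (Hkn : INR k < INR n) by (apply lt_INR; lia).
  assert (Hp : 0 < p < 1).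
  { unfold p; split.
    - apply Rdiv_lt_0_compat; lra.
    - apply Rmult_lt_reg_r with (INR n); [lra|]. unfold Rdiv. rewrite Rmult_assoc, Rinv_l by lra. lra. }
  pose proof (binomial p (1 - p) n) as B.
  replace (p + (1 - p)) with 1 in B by ring. rewrite pow1 in B.
  assert (T : C n k * p ^ k * (1 - p) ^ (n - k) <= 1).
  { apply Rle_trans with (sum_f_R0 (fun i => C n i * p ^ i * (1 - p) ^ (n - i)) n); [|lra].
    apply (single_le (fun i => C n i * p ^ i * (1 - p) ^ (n - i))); [|lia].
    intros i _. pose proof (C_pos n i).
    pose proof (pow_lt p i ltac:(lra)). pose proof (pow_lt (1 - p) (n - i) ltac:(lra)).
    apply Rlt_le. apply Rmult_lt_0_compat; [apply Rmult_lt_0_compat|]; lra. }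
  rewrite Rmult_assoc in T. unfold p in T. rewrite key in T by lia. fold p in T.
  rewrite Rpower_Ropp in T.
  pose proof (Rp2_pos (INR n * Hbin p)) as Q.
  apply Rmult_le_compat_r with (r := Rpower 2 (INR n * Hbin p)) in T; [|lra].
  rewrite Rmult_assoc, Rinv_l, Rmult_1_r, Rmult_1_l in T by lra.
  exact T.
Qed.

Lemma ent_low n x : (1 <= n)%nat -> (x <= n)%nat ->
  1 <= (INR n + 1) * C n x * Rpower 2 (- (INR n * Hbin (INR x / INR n))).
Proof.
  intros Hn Hx.
  assert (HN : 0 < INR n) by (apply lt_0_INR; lia).
  destruct (Nat.eq_dec x 0) as [e|e].
  { subst x. rewrite Cn0. replace (INR 0 / INR n) with 0 by (simpl; field; lra).
    rewrite Hbin0, Rmult_0_r, Ropp_0, Rpower_O by lra. lra. }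
  destruct (Nat.eq_dec x n) as [e'|e'].
  { subst x. rewrite Cnn. replace (INR n / INR n) with 1 by (field; lra).
    rewrite Hbin1, Rmult_0_r, Ropp_0, Rpower_O by lra. lra. }
  set (N := INR n). set (X := INR x).
  assert (HX : 0 < X) by (apply lt_0_INR; lia).
  assert (HXN : X < N) by (apply lt_INR; lia).
  set (ip := / N).
  assert (Hip : 0 < ip) by (apply Rinv_0_lt_compat; lra).
  set (p := X / N).
  set (q := 1 - p).
  assert (Ep : p = X * ip) by reflexivity.
  assert (Eq : q = (N - X) * ip) by (unfold q, p, ip; field; lra).
  assert (Hp : 0 < p) by (rewrite Ep; apply Rmult_lt_0_compat; lra).
  assert (Hq : 0 < q) by (rewrite Eq; apply Rmult_lt_0_compat; lra).
  pose (t := fun j => C n j * p ^ j * q ^ (n - j)).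
  assert (Tpos : forall j, 0 <= t j).
  { intro j. unfold t. pose proof (C_pos n j).
    pose proof (pow_lt p j Hp). pose proof (pow_lt q (n - j) Hq).
    apply Rlt_le. apply Rmult_lt_0_compat; [apply Rmult_lt_0_compat|]; lra. }
  assert (Rat : forall j, (j < n)%nat -> t (S j) * (INR j + 1) * q = t j * (N - INR j) * p).
  { intros j Hj. pose proof (Core.X4 n j Hj) as E.
    rewrite S_INR in E. rewrite minus_INR in E by lia.
    unfold t.
    replace (q ^ (n - j)) with (q * q ^ (n - S j)) by (replace (n - j)%nat with (S (n - S j)) by lia; reflexivity).
    change (p ^ S j) with (p * p ^ j).
    replace (C n (S j) * (p * p ^ j) * q ^ (n - S j) * (INR j + 1) * q)
      with ((C n (S j) * (INR j + 1)) * (p * p ^ j * q ^ (n - S j) * q)) by ring.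
    rewrite E. fold N. ring. }
  assert (Up : forall j, (x <= j)%nat -> (j < n)%nat -> t (S j) <= t j).
  { intros j H1 H2. pose proof (Rat j H2) as R.
    assert (HJ : X <= INR j) by (apply le_INR; lia).
    assert (HJN : INR j + 1 <= N) by (rewrite <- S_INR; apply le_INR; lia).
    assert (HJ0 : 0 <= INR j) by apply pos_INR.
    set (c := (INR j + 1) * q).
    assert (Hc : 0 < c) by (unfold c; apply Rmult_lt_0_compat; lra).
    assert (Hd : (N - INR j) * p <= c).
    { unfold c. rewrite Ep, Eq.
      replace ((N - INR j) * (X * ip)) with (((N - INR j) * X) * ip) by ring.
      replace ((INR j + 1) * ((N - X) * ip)) with (((INR j + 1) * (N - X)) * ip) by ring.
      apply Rmult_le_compat_r; [lra|]. nra. }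
    apply Rmult_le_reg_r with c; [exact Hc|].
    replace (t (S j) * c) with (t j * ((N - INR j) * p)) by (unfold c; rewrite <- !Rmult_assoc; symmetry; exact R).
    apply Rmult_le_compat_l; [apply Tpos|exact Hd]. }
  assert (Down : forall j, (S j <= x)%nat -> t j <= t (S j)).
  { intros j H1. assert (H2 : (j < n)%nat) by lia. pose proof (Rat j H2) as R.
    assert (HJ : INR j + 1 <= X) by (rewrite <- S_INR; apply le_INR; lia).
    assert (HJ0 : 0 <= INR j) by apply pos_INR.
    set (d := (N - INR j) * p).
    assert (Hd : 0 < d) by (unfold d; apply Rmult_lt_0_compat; lra).
    assert (Hc : (INR j + 1) * q <= d).
    { unfold d. rewrite Ep, Eq.
      replace ((N - INR j) * (X * ip)) with (((N - INR j) * X) * ip) by ring.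
      replace ((INR j + 1) * ((N - X) * ip)) with (((INR j + 1) * (N - X)) * ip) by ring.
      apply Rmult_le_compat_r; [lra|]. nra. }
    apply Rmult_le_reg_r with d; [exact Hd|].
    replace (t j * d) with (t (S j) * ((INR j + 1) * q)) by (unfold d; rewrite <- !Rmult_assoc; exact R).
    apply Rmult_le_compat_l; [apply Tpos|exact Hc]. }
  assert (UpI : forall d, (x + d <= n)%nat -> t (x + d)%nat <= t x).
  { induction d; intro H.
    - rewrite Nat.add_0_r. lra.
    - replace (x + S d)%nat with (S (x + d)) by lia.
      pose proof (Up (x + d)%nat ltac:(lia) ltac:(lia)). pose proof (IHd ltac:(lia)). lra. }
  assert (DownI : forall d, (d <= x)%nat -> t (x - d)%nat <= t x).
  { induction d; intro H.
    - rewrite Nat.sub_0_r. lra.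
    - pose proof (Down (x - S d)%nat ltac:(lia)).
      replace (S (x - S d)) with (x - d)%nat in H0 by lia.
      pose proof (IHd ltac:(lia)). lra. }
  assert (Max : forall j, (j <= n)%nat -> t j <= t x).
  { intros j Hj. destruct (Nat.le_gt_cases x j) as [h|h].
    - replace j with (x + (j - x))%nat by lia. apply UpI. lia.
    - replace j with (x - (x - j))%nat by lia. apply DownI. lia. }
  pose proof (binomial p q n) as B.
  replace (p + q) with 1 in B by (unfold q; ring). rewrite pow1 in B.
  pose proof (sum_le_const t n (t x) Max) as S.
  fold t in B. rewrite S_INR in S. fold N in S.
  assert (Kx : p ^ x * q ^ (n - x) = Rpower 2 (- (N * Hbin p))).
  { unfold q, p, X, N. apply key; lia. }
  rewrite <- B in S. unfold t in S. rewrite Rmult_assoc, Kx in S. rewrite Rmult_assoc. exact S.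
Qed.

Lemma part2 n (hn : (2 <= n)%nat) :
  forall (k x : nat), (k <= n)%nat -> (x <= n)%nat ->
     Rabs (kraw n k (INR x)) <
       Rpower 2 ((INR n / 2) *
                 (1 + Hbin (INR k / INR n) - Hbin (INR x / INR n)
                  + (1 / INR n) * log2 (INR n + 1))).
Proof.
  intros k x hk hx.
  assert (HN : 0 < INR n) by (apply lt_0_INR; lia).
  pose proof (ent_up n k ltac:(lia) hk) as HU.
  pose proof (ent_low n x ltac:(lia) hx) as HL.
  pose proof (Core.X1 n k x hk hx) as H1.
  replace (INR 2) with 2 in H1 by (simpl; lra).
  set (N := INR n) in *.
  set (Hk := Hbin (INR k / N)) in *.
  set (Hx := Hbin (INR x / N)) in *.
  set (K := kraw n k (INR x)) in *.
  set (U := Rpower 2 (N * Hk)) in *.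
  set (V := Rpower 2 (- (N * Hx))) in *.
  set (E := N / 2 * (1 + Hk - Hx + 1 / N * log2 (N + 1))).
  assert (HUp : 0 < U) by apply Rp2_pos.
  assert (HVp : 0 < V) by apply Rp2_pos.
  assert (HP : 0 < 2 ^ n) by (apply pow_lt; lra).
  assert (HCk : 0 < C n k) by apply C_pos.
  assert (HCx : 0 < C n x) by apply C_pos.
  assert (E2 : Rpower 2 E * Rpower 2 E = 2 ^ n * U * (N + 1) * V).
  { rewrite <- Rpower_plus.
    replace (E + E) with (N + (N * Hk + (- (N * Hx) + log2 (N + 1)))) by (unfold E; field; lra).
    rewrite !Rpower_plus. unfold N at 1. rewrite Rpower_pow by lra.
    replace (Rpower 2 (log2 (N + 1))) with (N + 1).
    - fold U V. ring.
    - unfold Rpower, log2. pose proof ln2_pos.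
      replace (ln (N + 1) / ln 2 * ln 2) with (ln (N + 1)) by (field; lra).
      rewrite exp_ln by lra. reflexivity. }
  assert (KK : K * K < 2 ^ n * U * (N + 1) * V).
  { destruct (Nat.eq_dec x 0) as [e|e].
    - subst x.
      assert (EK : K = C n k) by (unfold K; apply Core.X3; lia).
      assert (EV : V = 1).
      { unfold V, Hx. replace (INR 0 / N) with 0 by (simpl; field; lra).
        rewrite Hbin0, Rmult_0_r, Ropp_0. apply Rpower_O. lra. }
      rewrite Cn0 in H1. rewrite EV. rewrite EK in H1 |- *.
      assert (C n k * C n k <= 2 ^ n * U) by nra.
      assert (0 < 2 ^ n * U * N) by (apply Rmult_lt_0_compat; [apply Rmult_lt_0_compat|]; lra). nra.
    - pose proof (Core.X2 n k x hk hx ltac:(lia)) as H2.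
      replace (INR 2) with 2 in H2 by (simpl; lra).
      fold K in H2.
      assert (A1 : C n x * (K * K) < 2 ^ n * C n k) by nra.
      assert (A0 : 0 <= K * K) by nra.
      assert (A2 : K * K <= (C n x * (K * K)) * ((N + 1) * V)) by nra.
      assert (A3 : (C n x * (K * K)) * ((N + 1) * V) < (2 ^ n * C n k) * ((N + 1) * V)).
      { apply Rmult_lt_compat_r; [apply Rmult_lt_0_compat; lra|exact A1]. }
      assert (A4 : (2 ^ n * C n k) * ((N + 1) * V) <= (2 ^ n * U) * ((N + 1) * V)).
      { apply Rmult_le_compat_r; [apply Rlt_le, Rmult_lt_0_compat; lra|].
        apply Rmult_le_compat_l; lra. }
      nra. }
  rewrite <- E2 in KK.
  assert (HR : 0 < Rpower 2 E) by apply Rp2_pos.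
  fold E.
  destruct (Rlt_le_dec (Rabs K) (Rpower 2 E)) as [h|h]; [exact h|].
  exfalso.
  assert (Rabs K * Rabs K = K * K) by (rewrite <- Rabs_mult; apply Rabs_pos_eq; nra).
  assert (Rpower 2 E * Rpower 2 E <= Rabs K * Rabs K) by (apply Rmult_le_compat; lra).
  lra.
Qed.

Theorem lemma2 (n : nat) (hn : (2 <= n)%nat) :
  (* (1) *)
  (forall (k : nat), (2 <= k <= n)%nat ->
     forall x1 : R,
       kraw (n - 1) (k - 1) x1 = 0 ->
       (forall y : R, kraw (n - 1) (k - 1) y = 0 -> x1 <= y) ->
       forall x : R, 0 <= x <= x1 -> kraw n k x >= kraw n k (x + 1))
  /\
  (* (2) *)
  (forall (k x : nat), (k <= n)%nat -> (x <= n)%nat ->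
     Rabs (kraw n k (INR x)) <
       Rpower 2 ((INR n / 2) *
                 (1 + Hbin (INR k / INR n) - Hbin (INR x / INR n)
                  + (1 / INR n) * log2 (INR n + 1)))).
Proof.
  split.
  - exact (part1 n hn).
  - exact (part2 n hn).
Qed.
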